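(* Let $a\geq 1$ and $b\geq 1$ be integers and let $x\in\Lambda^{a+b}$ satisfy $T_{a,b}^k(x)\to(0,\ldots,0)$ as $k\to\infty$. Then the series $\sum_{k\geq 0}x_a^{(k)}$ converges and $\sigma(x)=b\sum_{k\geq 0}x_a^{(k)}$.
   Context: For $n\geq 1$ let $\Lambda^n=\{x\in\mathbb{R}^n : 0\leq x_1\leq\cdots\leq x_n\}$. For integers $a,b\geq 1$ the map $T_{a,b}:\Lambda^{a+b}\to\Lambda^{a+b}$ sends $x$ to the vector obtained by arranging $x_1,\ldots,x_a,\,x_{a+1}-x_a,\ldots,x_{a+b}-x_a$ in nondecreasing order. Write $x^{(k)}=T_{a,b}^k(x)$ and $x^{(k)}_i$ for its $i$-th coordinate; $\sigma(x)=x_1+\cdots+x_{a+b}$. *)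

(* Defs.v *)
From HB Require Import structures.
From mathcomp Require Import all_boot all_order all_algebra.
From mathcomp Require Import all_classical all_reals all_analysis.
Set Implicit Arguments. Unset Strict Implicit. Unset Printing Implicit Defensive.
Import Order.TTheory GRing.Theory Num.Theory.
Import numFieldNormedType.Exports.
Local Open Scope ring_scope.

(* Vectors of R^n are represented as sequences of length n; coordinate x_i
   (1-based, as in the paper) is [nth 0 x (i-1)]. *)

Definition Lambda (R : realType) (n : nat) (x : seq R) : Prop :=
  size x = n /\ 0 <= nth 0 x 0 /\ sorted <=%R x.

Definition Tab (R : realType) (a b : nat) (x : seq R) : seq R :=
  let xa := nth 0 x a.-1 in
  sort <=%R (take a x ++ [seq y - xa | y <- drop a x]).

Definition Titer (R : realType) (a b k : nat) (x : seq R) : seq R :=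
  iter k (Tab a b) x.

Definition sigma (R : realType) (x : seq R) : R := \sum_(y <- x) y.

Definition coordseq (R : realType) (a b i : nat) (x : seq R) : R^nat :=
  fun k => nth 0 (Titer a b k x) i.-1.

(* Main.v *)
Require Import Defs.
From HB Require Import structures.
From mathcomp Require Import all_boot all_order all_algebra.
From mathcomp Require Import all_classical all_reals all_analysis.
From mathcomp Require Import lra.
Import Order.TTheory GRing.Theory Num.Theory.
Import numFieldNormedType.Exports.
Local Open Scope classical_set_scope.
Local Open Scope ring_scope.

Lemma size_Tab (R : realType) (a b : nat) (x : seq R) :
  (1 <= b)%N -> size x = (a + b)%N -> size (Tab a b x) = (a + b)%N.
Proof.
move=> hb hs; rewrite /Tab size_sort size_cat size_take size_map size_drop hs.
rewrite -{1}(addn0 a) ltn_add2l hb.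
by rewrite subnKC // leq_addr.
Qed.

Lemma sum_shift (R : realType) (s : seq R) (c : R) :
  \sum_(y <- [seq y - c | y <- s]) y = \sum_(y <- s) y - (size s)%:R * c.
Proof.
elim: s => [|y s IH]; first by rewrite !big_nil mul0r subr0.
rewrite /= !big_cons IH -add1n natrD mulrDl mul1r; lra.
Qed.

Lemma sigma_Tab (R : realType) (a b : nat) (x : seq R) :
  size x = (a + b)%N -> sigma (Tab a b x) = sigma x - b%:R * nth 0 x a.-1.
Proof.
move=> hs; rewrite /sigma /Tab (perm_big _ (permEl (perm_sort _ _))) big_cat /=.
rewrite sum_shift size_drop hs addKn.
have := congr1 (fun s => \sum_(y <- s) y) (cat_take_drop a x).
rewrite big_cat /= => <-; lra.
Qed.

Lemma size_Titer (R : realType) (a b k : nat) (x : seq R) :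
  (1 <= b)%N -> size x = (a + b)%N -> size (Titer a b k x) = (a + b)%N.
Proof.
move=> hb hs; elim: k => [|k IH] //=.
by rewrite size_Tab.
Qed.

Lemma sigma_Titer (R : realType) (a b : nat) (x : seq R) n :
  (1 <= b)%N -> size x = (a + b)%N ->
  sigma (Titer a b n x) = sigma x - b%:R * series (coordseq a b a x) n.
Proof.
move=> hb hs; elim: n => [|n IH].
  by rewrite /series /= big_geq // mulr0 subr0.
rewrite /Titer iterS -/(Titer a b n x) sigma_Tab ?size_Titer // IH.
rewrite /series /= big_nat_recr //= mulrDr /coordseq; lra.
Qed.

Lemma cvg_sum0 (R : realType) (I : eqType) (r : seq I) (f : I -> R^nat) :
  (forall i, i \in r -> f i @ \oo --> 0) ->
  (fun k => \sum_(i <- r) f i k) @ \oo --> 0.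
Proof.
elim: r => [|j r IH] h.
  under eq_fun do rewrite big_nil.
  exact: cvg_cst.
under eq_fun do rewrite big_cons.
have -> : nbhs (0:R) = nbhs (0 + 0 : R) by rewrite addr0.
apply: cvgD.
  by apply: h; rewrite mem_head.
exact: IH (fun i hi => h i (@mem_behead _ (j :: r) _ hi)).
Qed.

Theorem lemma4p3 (R : realType) (a b : nat) (x : seq R) :
  (1 <= a)%N -> (1 <= b)%N -> Lambda (a + b) x ->
  (forall i, (1 <= i <= a + b)%N -> coordseq a b i x @ \oo --> 0) ->
  cvgn (series (coordseq a b a x)) /\
  sigma x = b%:R * limn (series (coordseq a b a x)).
Proof.
move=> ha hb [hs _] hc.
have hS : (fun n => sigma (Titer a b n x)) @ \oo --> 0.
  have -> : (fun n => sigma (Titer a b n x)) =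
     (fun n => \sum_(i <- iota 1 (a + b)) coordseq a b i x n).
    apply: funext => n; rewrite /sigma (big_nth 0) size_Titer //.
    rewrite /index_iota subn0 -(addn0 1%N) iotaDl big_map.
    by apply: eq_bigr => i _; rewrite /coordseq add1n.
  apply: cvg_sum0 => i; rewrite mem_iota => /andP [h1 h2]; apply: hc.
  by rewrite h1 -ltnS -(add1n (a + b)).
have hb0 : (b%:R : R) != 0 by rewrite pnatr_eq0 -lt0n.
have E : series (coordseq a b a x) =
    (fun n => (sigma x - sigma (Titer a b n x)) / b%:R).
  apply: funext => n; rewrite sigma_Titer //.
  by rewrite opprB addrC subrK mulrC mulKf.
have hl : series (coordseq a b a x) @ \oo --> sigma x / b%:R.
  rewrite E; apply: cvgMl; rewrite -{2}(subr0 (sigma x)).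
  by apply: cvgB => //; apply: cvg_cst.
split; first by apply/cvg_ex; exists (sigma x / b%:R).
by rewrite (cvg_lim _ hl) // mulrC mulfVK.
Qed.
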